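(* Let $\mathcal{W}=\{W_1,\dots,W_N\}$ be a finite set of $d\times k$ real matrices and let $\mathcal{V}$ be a linear subspace of $\mathbb{S}^d$. Consider the semidefinite program in the variables $X\in\mathbb{S}^d$, $X_i,T_i\in\mathbb{S}^k$ ($i=1,\dots,N$): $$\text{maximize }\sum_{i=1}^N\operatorname{trace}T_i\ \text{ subject to } X\in\mathcal{V},\ X=\sum_{i=1}^NW_iX_iW_i^T,\ X_i\succeq T_i,\ I\succeq T_i\succeq 0\ (i=1,\dots,N).$$ If $(X,X_1,\dots,X_N,T_1,\dots,T_N)$ is any optimal solution of this program, then $\sum_{i=1}^N\operatorname{rank}X_i\ge\sum_{i=1}^N\operatorname{rank}X_i'$ for all $X_1',\dots,X_N'\in\mathbb{S}^k_+$ with $\sum_{i=1}^NW_iX_i'W_i^T\in\mathcal{V}$; that is, $X$ is obtained from a representation maximizing $\sum_i\operatorname{rank}X_i$ over $\mathcal{V}\cap\mathcal{C}(\mathcal{W})^*$.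
   Context: $\mathbb{S}^d$ denotes real symmetric $d\times d$ matrices; $A\succeq B$ means $A-B$ is positive semidefinite; $\mathbb{S}^k_+$ is the positive semidefinite cone. $\mathcal{C}(\mathcal{W})^*=\{\sum_{i=1}^NW_iX_iW_i^T: X_i\in\mathbb{S}^k_+\}$. Note that the constraints force $X_i\succeq 0$. *)

(* Defs.v *)
From HB Require Import structures.
From mathcomp Require Import all_boot all_order all_algebra.
From mathcomp Require Import reals.
Set Implicit Arguments. Unset Strict Implicit. Unset Printing Implicit Defensive.
Import Order.TTheory GRing.Theory Num.Theory.
Local Open Scope ring_scope.

Definition symmx (R : realType) (n : nat) (A : 'M[R]_n) : Prop := A^T = A.

Definition psdmx (R : realType) (n : nat) (A : 'M[R]_n) : Prop :=
  symmx A /\ forall v : 'cV[R]_n, 0 <= (v^T *m A *m v) 0 0.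

Definition loewner_ge (R : realType) (n : nat) (A B : 'M[R]_n) : Prop :=
  psdmx (A - B).

Definition Wsum (R : realType) (d k N : nat) (W : 'I_N -> 'M[R]_(d, k))
  (Xs : 'I_N -> 'M[R]_k) : 'M[R]_d :=
  \sum_(i < N) (W i *m Xs i *m (W i)^T).

Definition sdp_feasible (R : realType) (d k N : nat) (W : 'I_N -> 'M[R]_(d, k))
  (V : {vspace 'M[R]_d}) (X : 'M[R]_d) (Xs Ts : 'I_N -> 'M[R]_k) : Prop :=
  [/\ symmx X, (forall i, symmx (Xs i)) & (forall i, symmx (Ts i))] /\
  [/\ (X \in V)%VS, X = Wsum W Xs,
      (forall i, loewner_ge (Xs i) (Ts i)),
      (forall i, loewner_ge 1%:M (Ts i)) &
      (forall i, loewner_ge (Ts i) 0)].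

Definition sdp_objective (R : realType) (k N : nat) (Ts : 'I_N -> 'M[R]_k) : R :=
  \sum_(i < N) \tr (Ts i).

Definition sdp_optimal (R : realType) (d k N : nat) (W : 'I_N -> 'M[R]_(d, k))
  (V : {vspace 'M[R]_d}) (X : 'M[R]_d) (Xs Ts : 'I_N -> 'M[R]_k) : Prop :=
  sdp_feasible W V X Xs Ts /\
  forall (X' : 'M[R]_d) (Xs' Ts' : 'I_N -> 'M[R]_k),
    sdp_feasible W V X' Xs' Ts' -> sdp_objective Ts' <= sdp_objective Ts.

(* Main.v *)
Require Import Defs.
From HB Require Import structures.
From mathcomp Require Import all_boot all_order all_algebra.
From mathcomp Require Import reals.
From mathcomp Require Import ring lra.
From Stdlib Require IndefiniteDescription.
Set Implicit Arguments. Unset Strict Implicit. Unset Printing Implicit Defensive.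
Import Order.TTheory GRing.Theory Num.Theory.
Local Open Scope ring_scope.

Section S.
Variable R : realType.

Definition bf n (A : 'M[R]_n) (u v : 'cV[R]_n) : R := (u^T *m A *m v) 0 0.
Definition nrm2 m (v : 'cV[R]_m) : R := (v^T *m v) 0 0.

Lemma nrm2_sum m (v : 'cV[R]_m) : nrm2 v = \sum_i v i 0 ^+ 2.
Proof. rewrite /nrm2 mxE; apply: eq_bigr => i _; rewrite mxE expr2 //. Qed.

Lemma nrm2_ge0 m (v : 'cV[R]_m) : 0 <= nrm2 v.
Proof. rewrite nrm2_sum; apply: sumr_ge0 => i _; exact: sqr_ge0. Qed.

Lemma nrm2_eq0 m (v : 'cV[R]_m) : nrm2 v = 0 -> v = 0.
Proof.
rewrite nrm2_sum => H; apply/matrixP => i j; rewrite ord1 mxE.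
have := @psumr_eq0P _ _ predT (fun i => v i 0 ^+ 2) (fun i _ => sqr_ge0 (v i 0)) H i isT.
by move/eqP; rewrite sqrf_eq0 => /eqP.
Qed.

Lemma bf_sym n (A : 'M[R]_n) u v : symmx A -> bf A u v = bf A v u.
Proof.
move=> hA; rewrite /bf.
have -> : (u^T *m A *m v) 0 0 = ((u^T *m A *m v)^T) 0 0 by rewrite [RHS]mxE.
rewrite !trmx_mul trmxK hA mulmxA. reflexivity.
Qed.

Lemma bf_expand n (A : 'M[R]_n) u w t : symmx A ->
  bf A (u + t *: w) (u + t *: w) = bf A u u + 2 * t * bf A w u + t ^+ 2 * bf A w w.
Proof.
move=> hA; rewrite /bf.
have -> : (u + t *: w)^T = u^T + t *: w^T by rewrite linearD linearZ.
rewrite !mulmxDl !mulmxDr -!scalemxAl -!scalemxAr.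
have := bf_sym u w hA; rewrite /bf !mxE => e.
rewrite e; ring.
Qed.


Lemma bf_mulr n (A : 'M[R]_n) u v : bf A u v = (u^T *m (A *m v)) 0 0.
Proof. by rewrite /bf mulmxA. Qed.

Lemma psd_bf n (A : 'M[R]_n) v : psdmx A -> 0 <= bf A v v.
Proof. by case=> _ h; apply: h. Qed.

Lemma psd_ker n (A : 'M[R]_n) v : psdmx A -> bf A v v = 0 -> A *m v = 0.
Proof.
move=> [hS hq] hv; set w := A *m v.
have hN : bf A w v = nrm2 w by rewrite bf_mulr.
have hm : 0 <= bf A w w := psd_bf w (conj hS hq).
have hN0 := nrm2_ge0 w.
set N := nrm2 w in hN hN0 *; set m := bf A w w in hm *.
set s := (m + 1)^-1.
have hs : s * (m + 1) = 1 by rewrite mulVf // lt0r_neq0 // ltr_wpDl.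
have hs0 : 0 < s by rewrite invr_gt0 ltr_wpDl.
have := psd_bf (v + (- (N * s)) *: w) (conj hS hq).
rewrite bf_expand // hv hN => H.
apply: nrm2_eq0; apply/eqP; rewrite -/N eq_le hN0 andbT.
rewrite -/m in H.
have e1 : (- (N * s)) ^+ 2 * m = s * N ^+ 2 * (1 - s).
  have : s * m = 1 - s by rewrite -hs; ring.
  move=> e; rewrite -e; ring.
rewrite e1 in H.
have H2 : 0 <= s * (N ^+ 2 * (- 1 - s)) by move: H; rewrite add0r; nra.
have H3 : 0 <= N ^+ 2 * (- 1 - s) by rewrite -(pmulr_rge0 _ hs0).
have : N ^+ 2 <= 0 by nra.
nra.
Qed.

Lemma psd_cs n (A : 'M[R]_n) u v : psdmx A -> bf A u v ^+ 2 <= bf A u u * bf A v v.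
Proof.
move=> hA; have [hS hq] := hA.
have [hc|hc] := eqVneq (bf A v v) 0.
  have e : bf A u v = 0 by rewrite bf_mulr (psd_ker hA hc) mulmx0 mxE.
  by rewrite e hc expr0n /= mulr0.
have hc0 : 0 < bf A v v by rewrite lt0r hc /= psd_bf.
have := psd_bf (u + (- (bf A v u / bf A v v)) *: v) hA.
rewrite bf_expand // (bf_sym u v hS).
set a := bf A u u; set b := bf A v u; set c := bf A v v => H.
have e : b / c * c = b by rewrite divfK // gt_eqF.
move: H e; set d := b / c => H e.
have H' : 0 <= a - d * b by move: H; rewrite -{2}e; nra.
have : 0 <= c * (a - d * b) by apply: mulr_ge0 => //; exact: ltW.
rewrite -{2}e; nra.
Qed.

Lemma sq_le_nrm2 m (v : 'cV[R]_m) i : v i 0 ^+ 2 <= nrm2 v.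
Proof.
rewrite nrm2_sum (bigD1 i) //= lerDl; apply: sumr_ge0 => j _; exact: sqr_ge0.
Qed.

Lemma bf_ub n (H : 'M[R]_n) : exists c, 0 <= c /\ forall v, bf H v v <= c * nrm2 v.
Proof.
exists (\sum_j \sum_i `|H i j|); split.
  by apply: sumr_ge0 => j _; apply: sumr_ge0 => i _.
move=> v; rewrite /bf mxE mulr_suml; apply: ler_sum => j _.
rewrite mxE !mulr_suml; apply: ler_sum => i _; rewrite mxE.
have h1 := sq_le_nrm2 v i; have h2 := sq_le_nrm2 v j.
have h3 : `|v i 0| * `|v j 0| <= nrm2 v.
  have h1' : `|v i 0| ^+ 2 <= nrm2 v by rewrite real_normK // num_real.
  have h2' : `|v j 0| ^+ 2 <= nrm2 v by rewrite real_normK // num_real.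
  have := normr_ge0 (v i 0); have := normr_ge0 (v j 0); nra.
apply: (le_trans (ler_norm _)); rewrite !normrM.
have := normr_ge0 (H i j); have := normr_ge0 (v i 0); have := normr_ge0 (v j 0); nra.
Qed.

Lemma nrm2_bf m n (M : 'M[R]_(m, n)) v : nrm2 (M *m v) = bf (M^T *m M) v v.
Proof. by rewrite /nrm2 /bf trmx_mul !mulmxA. Qed.

Lemma nrm2_ub m n (M : 'M[R]_(m, n)) : exists c, 0 <= c /\ forall v, nrm2 (M *m v) <= c * nrm2 v.
Proof.
have [c [c0 hc]] := bf_ub (M^T *m M); exists c; split => // v; rewrite nrm2_bf; exact: hc.
Qed.

Lemma psd_sq n (A : 'M[R]_n) : psdmx A -> exists c, 0 <= c /\ forall v, nrm2 (A *m v) <= c * bf A v v.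
Proof.
move=> hA; have [c [c0 hc]] := bf_ub A; exists c; split => // v.
set w := A *m v.
have e : bf A w v = nrm2 w by rewrite bf_mulr.
have hcs := psd_cs w v hA; rewrite e in hcs.
have h1 := hc w; have h2 := nrm2_ge0 w; have h3 := psd_bf v hA.
have h4 := psd_bf w hA.
have [hw|hw] := eqVneq (nrm2 w) 0; first by rewrite hw; apply: mulr_ge0.
have hw0 : 0 < nrm2 w by rewrite lt0r hw h2.
have : nrm2 w * nrm2 w <= nrm2 w * (c * bf A v v).
  apply: le_trans (_ : bf A w w * bf A v v <= _).
    by rewrite -expr2.
  have : bf A w w * bf A v v <= c * nrm2 w * bf A v v by apply: ler_wpM2r.
  by rewrite mulrCA mulrA.
by rewrite ler_pM2l.
Qed.

Lemma MMt0 m n (M : 'M[R]_(m, n)) : M *m M^T = 0 -> M = 0.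
Proof.
move=> h; apply/matrixP => i j.
have : (M *m M^T) i i = 0 by rewrite h mxE.
rewrite mxE => H.
have hnn : forall k, predT k -> 0 <= M i k * M^T k i.
  by move=> k _; rewrite mxE -expr2 sqr_ge0.
have := @psumr_eq0P _ _ predT (fun j => M i j * M^T j i) hnn H j isT.
rewrite mxE -expr2 => /eqP; rewrite sqrf_eq0 => /eqP ->; rewrite mxE; reflexivity.
Qed.

Lemma mx0_cols m n (M : 'M[R]_(m, n)) : (forall v : 'cV[R]_n, M *m v = 0) -> M = 0.
Proof.
move=> h; apply/matrixP => i j.
have : col j M i 0 = 0 by rewrite colE h mxE.
by rewrite !mxE.
Qed.

Lemma bfD n (A B : 'M[R]_n) v : bf (A + B) v v = bf A v v + bf B v v.
Proof. by rewrite /bf mulmxDr mulmxDl mxE. Qed.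
Lemma bfN n (A : 'M[R]_n) v : bf (- A) v v = - bf A v v.
Proof. by rewrite /bf mulmxN mulNmx mxE. Qed.
Lemma bfB n (A B : 'M[R]_n) v : bf (A - B) v v = bf A v v - bf B v v.
Proof. by rewrite bfD bfN. Qed.
Lemma bfZ n (A : 'M[R]_n) a v : bf (a *: A) v v = a * bf A v v.
Proof. by rewrite /bf -scalemxAr -scalemxAl mxE. Qed.
Lemma bf1 n (v : 'cV[R]_n) : bf 1%:M v v = nrm2 v.
Proof. by rewrite /bf mulmx1. Qed.

Lemma bf_diag n (A : 'M[R]_n) i : bf A (delta_mx i 0) (delta_mx i 0) = A i i.
Proof. by rewrite /bf trmx_delta -rowE -colE !mxE. Qed.

Lemma psd_tr n (A : 'M[R]_n) : psdmx A -> 0 <= \tr A.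
Proof.
move=> hA; rewrite /mxtrace; apply: sumr_ge0 => i _; rewrite -bf_diag; exact: psd_bf.
Qed.

Lemma psd_MtM m n (M : 'M[R]_(m, n)) : psdmx (M^T *m M).
Proof.
split; first by rewrite /symmx trmx_mul trmxK.
by move=> v; rewrite -/(bf _ v v) -nrm2_bf nrm2_ge0.
Qed.

Lemma proj_ex k (S : 'M[R]_k) : symmx S -> exists P : 'M[R]_k,
  [/\ P^T = P, P *m P = P, \tr P = (\rank S)%:R, S *m P = S &
      exists E : 'M_k, P = E *m S].
Proof.
move=> hS.
set R0 := row_base S.
have hRf : row_free R0 := row_base_free S.
have [D hD] : exists D, S = D *m R0 by apply/submxP; rewrite /R0 eq_row_base.
have [E0 hE0] : exists E0, R0 = E0 *m S by apply/submxP; rewrite /R0 eq_row_base.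
clearbody R0.
set G := R0 *m R0^T.
have hG : G \in unitmx.
  rewrite -row_free_unit -kermx_eq0; apply/eqP.
  set K := kermx G.
  have hK : K *m G = 0 by exact: mulmx_ker.
  have : (K *m R0) *m (K *m R0)^T = 0.
    by rewrite trmx_mul mulmxA -(mulmxA K R0) -/G hK mul0mx.
  move/MMt0 => /eqP; rewrite mulmx_free_eq0 //; exact/eqP.
have hGt : G^T = G by rewrite /G trmx_mul trmxK.
set P := R0^T *m invmx G *m R0.
exists P; split.
- rewrite /P !trmx_mul trmxK trmx_inv hGt mulmxA.
- rewrite /P -!mulmxA; congr (_ *m _).
  rewrite !mulmxA -(mulmxA _ R0) -/G -(mulmxA _ (invmx G) G) mulVmx // mulmx1; reflexivity.
- rewrite /P -mulmxA; apply: (etrans (mxtrace_mulC _ _)).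
  by rewrite -mulmxA -/G mulVmx // mxtrace1.
- rewrite /P {1}hD !mulmxA -(mulmxA D) -/G -(mulmxA _ G) mulmxV // mulmx1 -hD //.
- by exists (R0^T *m invmx G *m E0); rewrite -[RHS]mulmxA -hE0.
Qed.

Lemma partA k (S : 'M[R]_k) : psdmx S -> exists (P : 'M[R]_k) (t : R),
  [/\ 0 <= t, psdmx P, psdmx (1%:M - P), psdmx (t *: S - P)
     & \tr P = (\rank S)%:R].
Proof.
move=> hA; have [hS hq] := hA.
have [P [hPt hPP htr hSP [E hE]]] := proj_ex hS.
have [c1 [c10 hc1]] := nrm2_ub E.
have [c2 [c20 hc2]] := psd_sq hA.
have hbP : forall v, bf P v v = nrm2 (P *m v) by move=> v; rewrite nrm2_bf hPt hPP.
exists P, (c1 * c2); split => //.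
- exact: mulr_ge0.
- by split => // v; rewrite -/(bf _ v v) hbP nrm2_ge0.
- have e : (1%:M - P)^T *m (1%:M - P) = 1%:M - P.
    have et : (1%:M - P)^T = 1%:M - P by rewrite linearB /= trmx1 hPt.
    by rewrite et mulmxBl mul1mx mulmxBr mulmx1 hPP subrr subr0.
  rewrite -e; exact: psd_MtM.
- split.
    by rewrite /symmx linearB linearZ /= hS hPt.
  move=> v; rewrite -/(bf _ v v) bfB bfZ hbP subr_ge0 hE -mulmxA.
  apply: le_trans (hc1 _) _; rewrite -mulrA; apply: ler_wpM2l => //.
Qed.

Lemma partB k (X T : 'M[R]_k) : symmx X -> psdmx T -> psdmx (X - T) ->
  psdmx (1%:M - T) -> \tr T <= (\rank X)%:R.
Proof.
move=> hX hT hXT h1T.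
have [P [hPt hPP htr hXP _]] := proj_ex hX.
have hTs : T^T = T by case: hT.
have hT1 : T *m (1%:M - P) = 0.
  apply: mx0_cols => v; rewrite -mulmxA; set w := (1%:M - P) *m v.
  have hXw : X *m w = 0 by rewrite /w mulmxA mulmxBr mulmx1 hXP subrr mul0mx.
  apply: (psd_ker hT); apply/eqP; rewrite eq_le (psd_bf _ hT) andbT.
  have := psd_bf w hXT; rewrite bfB [bf X _ _]bf_mulr hXw mulmx0 mxE sub0r oppr_ge0 //.
have hTP : T *m P = T.
  by move: hT1; rewrite mulmxBr mulmx1 => /subr0_eq.
have hPT : P *m T = T.
  by rewrite -{1}hPt -{1}hTs -trmx_mul hTP hTs.
have hPT' : psdmx (P - T).
  split; first by rewrite /symmx linearB /= hPt hTs.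
  move=> v; rewrite -/(bf _ v v) bfB subr_ge0.
  have e : bf T v v = bf T (P *m v) (P *m v).
    by rewrite /bf trmx_mul hPt -!mulmxA (mulmxA T) hTP (mulmxA P) hPT.
  rewrite e; have := psd_bf (P *m v) h1T; rewrite bfB bf1 subr_ge0 => h.
  by apply: le_trans h _; rewrite nrm2_bf hPt hPP.
have := psd_tr hPT'; rewrite linearB /= subr_ge0 htr //.
Qed.

Lemma psdD n (A B : 'M[R]_n) : psdmx A -> psdmx B -> psdmx (A + B).
Proof.
move=> hA hB; have [hAs _] := hA; have [hBs _] := hB; split.
  by rewrite /symmx linearD /= hAs hBs.
move=> v; rewrite -/(bf _ v v) bfD; apply: addr_ge0; exact: psd_bf.
Qed.

Lemma psdZ n (A : 'M[R]_n) a : 0 <= a -> psdmx A -> psdmx (a *: A).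
Proof.
move=> ha hA; have [hAs _] := hA; split.
  by rewrite /symmx linearZ /= hAs.
move=> v; rewrite -/(bf _ v v) bfZ; apply: mulr_ge0 => //; exact: psd_bf.
Qed.

Lemma partA' k (S : 'M[R]_k) : psdmx S -> exists p : 'M[R]_k * R,
  [/\ 0 <= p.2, psdmx p.1, psdmx (1%:M - p.1), psdmx (p.2 *: S - p.1)
     & \tr p.1 = (\rank S)%:R].
Proof. by move=> /partA [P [t H]]; exists (P, t). Qed.

End S.

Unset Implicit Arguments.

Theorem lemma7 (R : realType) (d k N : nat) (W : 'I_N -> 'M[R]_(d, k))
  (V : {vspace 'M[R]_d})
  (hV : forall A : 'M[R]_d, (A \in V)%VS -> symmx A)
  (X : 'M[R]_d) (Xs Ts : 'I_N -> 'M[R]_k) :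
  sdp_optimal W V X Xs Ts ->
  forall Xs' : 'I_N -> 'M[R]_k,
    (forall i, psdmx (Xs' i)) ->
    (Wsum W Xs' \in V)%VS ->
    (\sum_(i < N) \rank (Xs' i) <= \sum_(i < N) \rank (Xs i))%N.
Proof.
move=> [hfeas hopt] Xs' hXs' hV'.
have [[hXsym hXssym hTssym] [hXV hXeq hXT h1T hT0]] := hfeas.
pose Q i := proj1_sig (IndefiniteDescription.constructive_indefinite_description _ (partA' (hXs' i))).
have hQ : forall i, [/\ 0 <= (Q i).2, psdmx (Q i).1, psdmx (1%:M - (Q i).1),
     psdmx ((Q i).2 *: Xs' i - (Q i).1) & \tr (Q i).1 = (\rank (Xs' i))%:R].
  move=> i; exact: proj2_sig (IndefiniteDescription.constructive_indefinite_description _ (partA' (hXs' i))).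
pose t := \sum_i (Q i).2.
pose Xs'' i := t *: Xs' i.
pose Ps i := (Q i).1.
have hW : Wsum W Xs'' = t *: Wsum W Xs'.
  rewrite /Wsum scaler_sumr; apply: eq_bigr => i _.
  by rewrite /Xs'' -scalemxAr -scalemxAl.
have hXV' : (t *: Wsum W Xs' \in V)%VS by rewrite memvZ.
have hfeas' : sdp_feasible W V (t *: Wsum W Xs') Xs'' Ps.
  split; split.
  - exact: hV.
  - by move=> i; rewrite /symmx /Xs'' linearZ /=; case: (hXs' i) => -> _.
  - by move=> i; have [_ [hs _] _ _ _] := hQ i; exact: hs.
  - exact: hXV'.
  - by rewrite hW.
  - move=> i; rewrite /loewner_ge /Xs'' /Ps.
    have [h0 _ _ h3 _] := hQ i.
    have -> : t *: Xs' i - (Q i).1 = (t - (Q i).2) *: Xs' i + ((Q i).2 *: Xs' i - (Q i).1).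
      by rewrite scalerBl addrA subrK.
    apply: psdD => //; apply: psdZ => //.
    rewrite subr_ge0 /t (bigD1 i) //= lerDl; apply: sumr_ge0 => j _.
    by have [] := hQ j.
  - by move=> i; have [] := hQ i.
  - by move=> i; rewrite /loewner_ge subr0; have [] := hQ i.
have hle := hopt _ _ _ hfeas'.
rewrite -(ler_nat R) !natr_sum.
apply: le_trans (_ : \sum_(i < N) \tr (Ps i) <= _).
  by apply: ler_sum => i _; have [_ _ _ _ ->] := hQ i.
apply: le_trans hle _; apply: ler_sum => i _.
apply: partB.
- exact: hXssym.
- by have := hT0 i; rewrite /loewner_ge subr0.
- exact: hXT.
- exact: h1T.
Qed.
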